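(* Let $M$ be a finite abelian group of exponent greater than $2$ and let $f$ be a half-automorphism of $L_M$. Then for every $x\in M$ there is a unique $f''(x)\in M$ with $f(1,x)=(1,f''(x))$, and the map $f'':M\to M$ is an automorphism of $M$.
   Context: Let $K=\{1,a,b,c\}$ be the Klein four-group. Set $L_M=K\times M$ with the operation $(A,x)*(B,y)=(AB,xy)$ if $B=1$, and $(A,x)*(B,y)=(AB,x^{-1}y)$ if $B\neq 1$. A half-automorphism of a loop $L$ is a bijection $f:L\to L$ such that $f(XY)\in\{f(X)f(Y),f(Y)f(X)\}$ for all $X,Y\in L$. *)

(* Defs.v *)
From mathcomp Require Import all_boot all_fingroup all_solvable.
Set Implicit Arguments.
Unset Strict Implicit.
Unset Printing Implicit Defensive.

Inductive klein := K1 | Ka | Kb | Kc.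

Definition kmul (x y : klein) : klein :=
  match x, y with
  | K1, z | z, K1 => z
  | Ka, Ka | Kb, Kb | Kc, Kc => K1
  | Ka, Kb | Kb, Ka => Kc
  | Ka, Kc | Kc, Ka => Kb
  | Kb, Kc | Kc, Kb => Ka
  end.

Definition LM_mul (gT : finGroupType) (X Y : klein * gT) : klein * gT :=
  match Y.1 with
  | K1 => (kmul X.1 Y.1, (X.2 * Y.2)%g)
  | _ => (kmul X.1 Y.1, ((X.2)^-1 * Y.2)%g)
  end.

Definition half_automorphism (gT : finGroupType) (f : klein * gT -> klein * gT) :=
  bijective f /\
  forall X Y, f (LM_mul X Y) = LM_mul (f X) (f Y) \/
              f (LM_mul X Y) = LM_mul (f Y) (f X).

Definition group_automorphism (gT : finGroupType) (g : gT -> gT) :=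
  bijective g /\ {morph g : x y / (x * y)%g}.

(* Main.v *)
Require Import Defs.
From mathcomp Require Import all_boot all_fingroup all_solvable.

Theorem proposition4p9 (gT : finGroupType)
  (HM : abelian [set: gT]) (Hexp : 2 < exponent [set: gT])
  (f : klein * gT -> klein * gT) (Hf : half_automorphism f) :
  (forall x : gT, exists! y : gT, f (K1, x) = (K1, y)) /\
  exists f'' : gT -> gT,
    (forall x : gT, f (K1, x) = (K1, f'' x)) /\ group_automorphism f''.
Proof.
have comm : forall a b : gT, (a * b = b * a)%g.
  by move=> a b; apply: (centsP HM); rewrite ?inE.
case: Hf => bij hom.
have inj := bij_inj bij.
have fe : f (K1, 1%g) = (K1, 1%g).
  have E : LM_mul (K1, 1%g) (K1, 1%g) = (K1, 1%g :> gT) by rewrite /LM_mul /= mulg1.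
  have H : f (K1, 1%g) = LM_mul (f (K1, 1%g)) (f (K1, 1%g)).
    by case: (hom (K1, 1%g) (K1, 1%g)); rewrite E.
  move: H; case: (f (K1, 1%g)) => [[] z]; rewrite /LM_mul /= => //.
  by case=> /esym /(canRL (mulKg z)); rewrite mulVg => ->.
have sq : forall x : gT, (x * x != 1)%g -> (f (K1, x)).1 = K1.
  move=> x Hx; case E: (f (K1, x)) => [A z] /=.
  case: A E => // E; exfalso;
  (have H : f (LM_mul (K1, x) (K1, x)) = (K1, 1%g) by
     case: (hom (K1, x) (K1, x)) => ->; rewrite E /LM_mul /= mulVg);
  rewrite -fe /LM_mul /= in H; move: (inj _ _ H) => [] /eqP; by rewrite (negbTE Hx).
have [u Hu] : exists u : gT, (u * u != 1)%g.
  apply/existsP; rewrite -negb_forall; apply/negP => /forallP H.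
  have : exponent [set: gT] %| 2.
    by apply/exponentP => x _; rewrite expgS expg1; apply/eqP; apply: H.
  by move/(dvdn_leq (isT : 0 < 2)); rewrite leqNgt Hexp.
have inN : forall x : gT, (f (K1, x)).1 = K1.
  move=> x; case: (boolP (x * x != 1)%g) => [/sq //|]; rewrite negbK => /eqP Hx.
  have Hux : ((u * x) * (u * x) != 1)%g.
    by rewrite mulgA -(mulgA u x u) (comm x u) mulgA -mulgA Hx mulg1.
  have := sq _ Hux.
  have E : LM_mul (K1, u) (K1, x) = (K1, u * x)%g by [].
  rewrite -E; case: (hom (K1, u) (K1, x)) => ->;
  move: (sq _ Hu); move: (f (K1, u)) (f (K1, x)) => [A w] [B z]; rewrite /LM_mul /=;
  by case: A; case: B.
pose g x := (f (K1, x)).2.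
have gE : forall x, f (K1, x) = (K1, g x).
  by move=> x; move: (inN x); rewrite /g; case: (f (K1, x)) => [A z] /= ->.
split.
  move=> x; exists (g x); split; first exact: gE.
  by move=> y; rewrite gE => -[].
exists g; split => //.
have ginj : injective g.
  move=> x y H; have : f (K1, x) = f (K1, y) by rewrite !gE H.
  by move/inj => [].
split.
  exact: injF_bij ginj.
move=> x y /=.
have E : LM_mul (K1, x) (K1, y) = (K1, x * y)%g by [].
have := hom (K1, x) (K1, y); rewrite E !gE /LM_mul /=.
by case => -[] ->; rewrite // comm.
Qed.
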